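(* Let $\mathfrak{S}=(\mathcal{X},\mathsf{S},\gamma,(\Lambda_{a})_{a\in\mathcal{A}})$ be a spectral decomposition system for the Euclidean space $\mathfrak{H}$ and let $\Phi\colon\mathfrak{H}\to[-\infty,+\infty]$. Then the following are equivalent: (i) for all $X,Y\in\mathfrak{H}$, $\gamma(X)=\gamma(Y)$ implies $\Phi(X)=\Phi(Y)$; (ii) $\Phi\circ\Lambda_a=\Phi\circ\Lambda_b$ for all $a,b\in\mathcal{A}$; (iii) there exists an $\mathsf{S}$-invariant function $\varphi\colon\mathcal{X}\to[-\infty,+\infty]$ such that $\Phi=\varphi\circ\gamma$. Moreover, if (iii) holds, then $\varphi=\Phi\circ\Lambda_a$ for every $a\in\mathcal{A}$.
   Context: A Euclidean space is a finite-dimensional real inner product space; inner products are written $\langle\cdot,\cdot\rangle$ and norms $\|\cdot\|$. Let $\mathfrak{H}$ and $\mathcal{X}$ be Euclidean spaces, let $\mathsf{S}$ be a group acting on $\mathcal{X}$ by linear isometries, let $\gamma\colon\mathfrak{H}\to\mathcal{X}$, and let $(\Lambda_a)_{a\in\mathcal{A}}$ be a family of linear operators from $\mathcal{X}$ to $\mathfrak{H}$. The orbit of $x$ is $\mathsf{S}\cdot x=\{s\cdot x: s\in\mathsf{S}\}$; a map $f$ on $\mathcal{X}$ is $\mathsf{S}$-invariant if $f(s\cdot x)=f(x)$ for all $s,x$. The tuple is a spectral decomposition system for $\mathfrak{H}$ if: [A] every $\Lambda_a$ is an isometry; [B] there exists an $\mathsf{S}$-invariant $\tau\colon\mathcal{X}\to\mathcal{X}$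 with $\tau(x)\in\mathsf{S}\cdot x$ for all $x$ and $\gamma\circ\Lambda_a=\tau$ for all $a$; [C] for every $X\in\mathfrak{H}$ there is $a$ with $X=\Lambda_a\gamma(X)$; [D] $\langle X,Y\rangle\leq\langle\gamma(X),\gamma(Y)\rangle$ for all $X,Y\in\mathfrak{H}$. *)

(* Defs.v *)
From HB Require Import structures.
From mathcomp Require Import all_boot all_order all_algebra.
From mathcomp Require Import reals constructive_ereal.
Set Implicit Arguments. Unset Strict Implicit. Unset Printing Implicit Defensive.
Import Order.TTheory GRing.Theory Num.Theory.
Local Open Scope ring_scope.

Section Defs.
Variable R : realType.

(* ip is a real inner product on the (finite-dimensional) space V:
   bilinear (linear in the first argument + symmetric), positive definite. *)
Definition inner_product (V : vectType R) (ip : V -> V -> R) : Prop :=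
  [/\ forall x y, ip x y = ip y x,
      forall (c : R) x y z, ip (c *: x + y) z = c * ip x z + ip y z,
      forall x, 0 <= ip x x
    & forall x, ip x x = 0 -> x = 0].

Definition ipnorm (V : vectType R) (ip : V -> V -> R) (x : V) : R :=
  Num.sqrt (ip x x).

Definition is_linear (U V : vectType R) (f : U -> V) : Prop :=
  forall (c : R) x y, f (c *: x + y) = c *: f x + f y.

Definition linear_isometry (U V : vectType R) (ipU : U -> U -> R)
  (ipV : V -> V -> R) (f : U -> V) : Prop :=
  is_linear f /\ forall x, ipnorm ipV (f x) = ipnorm ipU x.

Definition is_group (G : Type) (mul : G -> G -> G) (e : G) (inv : G -> G)
  : Prop :=
  [/\ forall s t u, mul s (mul t u) = mul (mul s t) u,
      forall s, mul e s = s /\ mul s e = s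
    & forall s, mul (inv s) s = e /\ mul s (inv s) = e].

Definition acts_by_linear_isometries (X : vectType R) (ipX : X -> X -> R)
  (G : Type) (mul : G -> G -> G) (e : G) (inv : G -> G)
  (act : G -> X -> X) : Prop :=
  [/\ is_group mul e inv,
      forall x, act e x = x,
      forall s t x, act (mul s t) x = act s (act t x)
    & forall s, linear_isometry ipX ipX (act s)].

Definition in_orbit (X : vectType R) (G : Type) (act : G -> X -> X)
  (x x' : X) : Prop := exists s : G, x' = act s x.

Definition S_invariant (X : vectType R) (G : Type) (act : G -> X -> X)
  (T : Type) (f : X -> T) : Prop := forall s x, f (act s x) = f x.

Definition spectral_decomposition_system
  (H : vectType R) (ipH : H -> H -> R)
  (X : vectType R) (ipX : X -> X -> R)
  (G : Type) (act : G -> X -> X)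
  (gamma : H -> X) (A : Type) (Lam : A -> X -> H) : Prop :=
  [/\ forall a, linear_isometry ipX ipH (Lam a),
      (exists tau : X -> X,
                   [/\ S_invariant act tau,
                       forall x, in_orbit act x (tau x)
                     & forall a, gamma \o Lam a = tau]),
      (forall Y : H, exists a, Y = Lam a (gamma Y))
    & forall Y Z : H, ipH Y Z <= ipX (gamma Y) (gamma Z)].

End Defs.

(* Main.v *)
Require Import Defs.
From HB Require Import structures.
From mathcomp Require Import all_boot all_order all_algebra.
From mathcomp Require Import reals constructive_ereal.
From mathcomp Require boolp.
Import Order.TTheory GRing.Theory Num.Theory.
Local Open Scope ring_scope.

Theorem proposition4p1 (R : realType)
  (H : vectType R) (ipH : H -> H -> R) (hH : inner_product ipH)
  (X : vectType R) (ipX : X -> X -> R) (hX : inner_product ipX)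
  (G : Type) (mul : G -> G -> G) (e : G) (inv : G -> G) (act : G -> X -> X)
  (hact : acts_by_linear_isometries ipX mul e inv act)
  (gamma : H -> X) (A : Type) (Lam : A -> X -> H)
  (hsds : spectral_decomposition_system ipH ipX act gamma Lam)
  (Phi : H -> \bar R) :
  [/\ ((forall Y Z : H, gamma Y = gamma Z -> Phi Y = Phi Z) <->
       (forall a b : A, Phi \o Lam a = Phi \o Lam b)),
      ((forall a b : A, Phi \o Lam a = Phi \o Lam b) <->
       (exists phi : X -> \bar R, S_invariant act phi /\ Phi = phi \o gamma))
    & forall phi : X -> \bar R, S_invariant act phi -> Phi = phi \o gamma ->
        forall a : A, phi = Phi \o Lam a].
Proof.
case: hsds => _ [tau [tauinv tauorb gL]] hC _.
have key : forall phi : X -> \bar R, S_invariant act phi -> Phi = phi \o gamma ->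
    forall a x, Phi (Lam a x) = phi x.
  move=> phi hphi -> a x /=.
  have -> : gamma (Lam a x) = tau x by rewrite -(gL a).
  by case: (tauorb x) => s ->; rewrite hphi.
have ii_iii : (forall a b : A, Phi \o Lam a = Phi \o Lam b) ->
    (exists phi : X -> \bar R, S_invariant act phi /\ Phi = phi \o gamma).
  move=> h2; case: (hC 0) => a0 _.
  have hP : Phi = (Phi \o Lam a0) \o gamma.
    apply: boolp.funext => Y /=; case: (hC Y) => a {1}->.
    by rewrite -/((Phi \o Lam a) (gamma Y)) (h2 a a0).
  exists (Phi \o Lam a0); split=> // s x.
  have E : forall y, (Phi \o Lam a0) y = (Phi \o Lam a0) (tau y).
    move=> y; rewrite -(gL a0) /=.
    by rewrite -/((Phi \o Lam a0) (gamma (Lam a0 y))) -/((Phi \o Lam a0 \o gamma) (Lam a0 y)) -hP.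
  by rewrite E tauinv -E.
have iii_i : (exists phi : X -> \bar R, S_invariant act phi /\ Phi = phi \o gamma) ->
    (forall Y Z : H, gamma Y = gamma Z -> Phi Y = Phi Z).
  by case=> phi [_ ->] Y Z /= ->.
split.
- split; last by move=> h; apply: iii_i; apply: ii_iii.
  move=> h1 a b; apply: boolp.funext => x /=; apply: h1.
  by rewrite -/((gamma \o Lam a) x) -/((gamma \o Lam b) x) !gL.
- split=> //; case=> phi [hphi hP] a b.
  by apply: boolp.funext => x /=; rewrite !(key phi).
- move=> phi hphi hP a; apply: boolp.funext => x /=; by rewrite (key phi).
Qed.
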